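(* Let $[Q,P]$ be a dynamical structure function ($Q$ $p\times p$, $P$ $p\times m$, strictly proper) and assume $[I-Q,\ P]$ has only simple poles and has no common poles and zeros. Let $N(s)=C_2(A_2-sI)^{-1}B_2+I$ be a diagonal $p\times p$ transfer matrix (with minimal realisation where $A_2=\mathrm{diag}[a_1,\ldots,a_k]$, $B_2=\mathrm{diag}[b_1,\ldots,b_k]$, $C_2=\mathrm{diag}[c_1,\ldots,c_k]$ obtained by stacking Gilbert realisations of the diagonal entries, each $a_m$ diagonal). If a zero $\lambda_i$ of $[I-Q,\ P]$ with zero direction $v_i^T$ (i.e. $v_i^T[I-Q(\lambda_i),\ P(\lambda_i)]=0$) is cancelled by cascading $N(s)$ (forming $N(s)[I-Q,\ P]$), then $N[j,j](s)$ has a pole at $\lambda_i$ for every $j$ such that $\mathcal{B}(v_i^T)[j]\neq 0$, where $\mathcal{B}(\cdot)$ maps a matrix/vector to its Boolean (zero/nonzero) pattern. *)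

(* Defs.v *)
(* transfer matrices are matrices of rational functions
   {fraction {poly C}} over an algebraically closed numeric field C (e.g. C). *)
From HB Require Import structures.
From mathcomp Require Import all_boot all_order all_algebra.
Set Implicit Arguments. Unset Strict Implicit. Unset Printing Implicit Defensive.
Import Order.TTheory GRing.Theory Num.Theory.
Local Open Scope ring_scope.

Notation rfun C := {fraction {poly C}}.
Notation "x %:F" := (@FracField.tofrac _ x) : ring_scope.

Section Defs.
Variable C : numClosedFieldType.

Definition cst (c : C) : rfun C := (c%:P)%:F.
Definition svar : rfun C := ('X)%:F.

Definition analytic_at (f : rfun C) (z : C) : Prop :=
  exists n d : {poly C}, d.[z] != 0 /\ f = n%:F / d%:F.
Definition vanishes_at (f : rfun C) (z : C) : Prop :=
  exists n d : {poly C}, d.[z] != 0 /\ n.[z] = 0 /\ f = n%:F / d%:F.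
Definition has_pole (f : rfun C) (z : C) : Prop := ~ analytic_at f z.

Definition strictly_proper (f : rfun C) : Prop :=
  exists n d : {poly C}, d != 0 /\ (size n < size d)%N /\ f = n%:F / d%:F.

Definition mx_strictly_proper m n (G : 'M[rfun C]_(m, n)) : Prop :=
  forall i j, strictly_proper (G i j).

Definition mx_has_pole m n (G : 'M[rfun C]_(m, n)) (z : C) : Prop :=
  exists i j, has_pole (G i j) z.

Definition mx_simple_poles m n (G : 'M[rfun C]_(m, n)) : Prop :=
  forall i j (z : C), analytic_at ((svar - cst z) * G i j) z.

(* (left) zero of a transfer matrix G at z: there is a rational row vector
   u(s), analytic at z with u(z) <> 0, such that u(s) G(s) is analytic at z
   and vanishes at z (i.e. lim_{s->z} u(s)G(s) = 0). *)
Definition mx_has_zero m n (G : 'M[rfun C]_(m, n)) (z : C) : Prop :=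
  exists u : 'rV[rfun C]_m,
    (forall j, analytic_at (u 0 j) z) /\
    (exists j, ~ vanishes_at (u 0 j) z) /\
    (forall k, vanishes_at ((u *m G) 0 k) z).

Definition no_common_poles_zeros m n (G : 'M[rfun C]_(m, n)) : Prop :=
  forall z, ~ (mx_has_pole G z /\ mx_has_zero G z).

Definition is_dsf p m (Q : 'M[rfun C]_p) (P : 'M[rfun C]_(p, m)) : Prop :=
  mx_strictly_proper Q /\ mx_strictly_proper P /\ (forall i, Q i i = 0).

Definition ss_tf k p q (A : 'M[C]_k) (B : 'M[C]_(k, q)) (Cm : 'M[C]_(p, k))
    (D : 'M[C]_(p, q)) : 'M[rfun C]_(p, q) :=
  map_mx cst Cm *m invmx (map_mx cst A - svar%:M) *m map_mx cst B + map_mx cst D.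

(* (A, B) controllable: the column spaces of B, AB, ..., A^(k-1) B span C^k
   (stated with transposes, as mxalgebra works with row spaces) *)
Definition controllable k q (A : 'M[C]_k) (B : 'M[C]_(k, q)) : Prop :=
  (1%:M <= \sum_(i < k) <<B^T *m (A^T) ^+ i>>)%MS.
Definition observable k p (A : 'M[C]_k) (Cm : 'M[C]_(p, k)) : Prop :=
  controllable A^T Cm^T.
Definition minimal_realisation k p q (A : 'M[C]_k) (B : 'M[C]_(k, q))
    (Cm : 'M[C]_(p, k)) : Prop := controllable A B /\ observable A Cm.

End Defs.

(* Main.v *)
Require Import Defs.
From HB Require Import structures.
From mathcomp Require Import all_boot all_order all_algebra.
From mathcomp Require Import zify ring.
Import Order.TTheory GRing.Theory Num.Theory.
Local Open Scope ring_scope.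
Local Open Scope quotient_scope.
Set Implicit Arguments. Unset Strict Implicit.

Lemma frac_rep (R : idomainType) (x : {fraction R}) :
  exists n d : R, d != 0 /\ x = (FracField.tofrac n) / (FracField.tofrac d).
Proof.
elim/quotW: x => -[[n d] /= hd]; exists n, d; split => //.
have -> : FracField.tofrac n = \pi_({fraction R}) (Ratio n 1).
  by rewrite /FracField.tofrac; unlock.
have -> : FracField.tofrac d = \pi_({fraction R}) (Ratio d 1).
  by rewrite /FracField.tofrac; unlock.
have -> : (\pi_({fraction R}) (Ratio d 1))^-1 = \pi_({fraction R}) (FracField.invf (Ratio d 1)).
  by rewrite FracField.pi_inv.
have -> : \pi_({fraction R}) (Ratio n 1) * \pi_({fraction R}) (FracField.invf (Ratio d 1)) = \pi_({fraction R}) (FracField.mulf (Ratio n 1) (FracField.invf (Ratio d 1))).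
  by rewrite FracField.pi_mul.
apply/eqmodP; rewrite /= FracField.equivfE /FracField.mulf /FracField.invf.
rewrite !numden_Ratio ?oner_neq0 //= ?mulr1 ?mul1r //.
by rewrite mulrC.
Qed.

Section H.
Variable C : numClosedFieldType.
Implicit Types (n d g h : {poly C}) (z : C).

Lemma tofrac_neq0 (p : {poly C}) : p != 0 -> p%:F != 0 :> rfun C.
Proof. by rewrite tofrac_eq0. Qed.

Lemma frac_eqE n1 d1 n2 d2 : d1 != 0 -> d2 != 0 ->
  (n1%:F / d1%:F = n2%:F / d2%:F :> rfun C) -> n1 * d2 = n2 * d1.
Proof.
move=> h1 h2 E.
have h1' := tofrac_neq0 h1; have h2' := tofrac_neq0 h2.
have E2 : (n1 * d2)%:F = (n2 * d1)%:F :> rfun C.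
  rewrite !tofracM.
  apply/eqP; rewrite -(eqr_div _ _ h1' h2') E; exact: eqxx.
apply/eqP; rewrite -tofrac_eq E2; exact: eqxx.
Qed.

Lemma frac_eqI n1 d1 n2 d2 : d1 != 0 -> d2 != 0 -> n1 * d2 = n2 * d1 ->
  (n1%:F / d1%:F = n2%:F / d2%:F :> rfun C).
Proof.
move=> h1 h2 E; have h1' := tofrac_neq0 h1; have h2' := tofrac_neq0 h2.
apply/eqP; rewrite (eqr_div _ _ h1' h2') -!tofracM E; exact: eqxx.
Qed.

Lemma frac_mul n1 d1 n2 d2 :
  (n1%:F / d1%:F) * (n2%:F / d2%:F) = (n1 * n2)%:F / (d1 * d2)%:F :> rfun C.
Proof. by rewrite !tofracM invfM mulrACA. Qed.

Lemma frac_inv n d : (n%:F / d%:F)^-1 = d%:F / n%:F :> rfun C.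
Proof. by rewrite invf_div. Qed.

Lemma not_vanishes n d z : n.[z] != 0 -> d.[z] != 0 -> ~ vanishes_at (n%:F / d%:F) z.
Proof.
move=> hn hd [n' [d' [hd' [hn' E]]]].
have d0 : d != 0 by apply: contraNneq hd => ->; rewrite horner0.
have d0' : d' != 0 by apply: contraNneq hd' => ->; rewrite horner0.
have := frac_eqE d0 d0' E => /(congr1 (fun p => p.[z])); rewrite !hornerM hn' mul0r.
by apply/eqP; rewrite mulf_neq0.
Qed.

Lemma analytic_vanish (f1 f2 : rfun C) z : analytic_at f1 z -> vanishes_at f2 z -> vanishes_at (f1 * f2) z.
Proof.
move=> [n1 [d1 [h1 ->]]] [n2 [d2 [h2 [hn ->]]]].
exists (n1 * n2), (d1 * d2); rewrite frac_mul !hornerM hn mulr0 mulf_neq0 //.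
Qed.

Definition XF z : {poly C} := 'X - z%:P.

Lemma XF_neq0 z k : XF z ^+ k != 0.
Proof. by rewrite expf_neq0 // /XF polyXsubC_eq0. Qed.

Lemma decomp (f : rfun C) z : f != 0 -> exists abgh : nat * nat * {poly C} * {poly C},
  [/\ abgh.1.2.[z] != 0, abgh.2.[z] != 0 &
  f = (XF z ^+ abgh.1.1.1 * abgh.1.2)%:F / (XF z ^+ abgh.1.1.2 * abgh.2)%:F].
Proof.
move=> f0; have [n [d [d0 E]]] := frac_rep f.
have n0 : n != 0 by apply: contraNneq f0 => n0; rewrite E n0 tofrac0 mul0r.
have [a /sig2_eqW [g hg En]] := multiplicity_XsubC n z.
have [b /sig2_eqW [h hh Ed]] := multiplicity_XsubC d z.
rewrite n0 /root in hg; rewrite d0 /root in hh.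
exists (a, b, g, h); split => //=.
by rewrite E En Ed /XF [g * _]mulrC [h * _]mulrC.
Qed.

Lemma analytic_le (f : rfun C) z a b g h : g.[z] != 0 -> h.[z] != 0 ->
  f = (XF z ^+ a * g)%:F / (XF z ^+ b * h)%:F -> analytic_at f z -> (b <= a)%N.
Proof.
move=> hg hh E [n [d [hd E2]]]; rewrite leqNgt; apply/negP => ltab.
have h0 : h != 0 by apply: contraNneq hh => ->; rewrite horner0.
have d0 : d != 0 by apply: contraNneq hd => ->; rewrite horner0.
have := frac_eqE (mulf_neq0 (XF_neq0 z b) h0) d0 (etrans (esym E) E2).
rewrite -(subnKC (ltnW ltab)) exprD -!mulrA [RHS]mulrCA => E3.
have {E3}:= mulfI (XF_neq0 z a) E3.
move/(congr1 (fun p => p.[z])); rewrite !hornerM.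
rewrite /XF horner_exp hornerXsubC subrr expr0n subn_eq0 leqNgt ltab /= mul0r mulr0.
by apply/eqP; rewrite mulf_neq0.
Qed.

Lemma analytic_poly (p : {poly C}) z : analytic_at (p%:F) z.
Proof. exists p, 1; rewrite hornerC oner_neq0 tofrac1 invr1 mulr1; split => //. Qed.

Lemma vanishes0 z : vanishes_at (0 : rfun C) z.
Proof. exists 0, 1; rewrite hornerC oner_neq0 horner0 tofrac0 mul0r; split => //. Qed.

End H.

Theorem theorem1 (C : numClosedFieldType) (p m : nat)
  (Q : 'M[rfun C]_p) (P : 'M[rfun C]_(p, m))
  (hdsf : is_dsf Q P)
  (hsimple : mx_simple_poles (row_mx (1%:M - Q) P))
  (hnocommon : no_common_poles_zeros (row_mx (1%:M - Q) P))
  (N : 'M[rfun C]_p)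
  (hNdiag : forall i j, i != j -> N i j = 0)
  (k : nat) (A2 : 'M[C]_k) (B2 : 'M[C]_(k, p)) (C2 : 'M[C]_(p, k))
  (hA2diag : is_diag_mx A2)
  (hmin : minimal_realisation A2 B2 C2)
  (hN : N = ss_tf A2 B2 C2 1%:M)
  (lambda : C) (v : 'rV[C]_p)
  (hzero : mx_has_zero (row_mx (1%:M - Q) P) lambda)
  (hv : v != 0)
  (hdir : forall j, vanishes_at ((map_mx (@cst C) v *m row_mx (1%:M - Q) P) 0 j) lambda)
  (hcancel : ~ mx_has_zero (N *m row_mx (1%:M - Q) P) lambda) :
  forall j : 'I_p, v 0 j != 0 -> has_pole (N j j) lambda.
Proof.
move=> j vj; rewrite /has_pole => Nj_an; apply: hcancel.
set G := row_mx (1%:M - Q) P.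
case: (boolP [exists i, N i i == 0]) => [/existsP [i /eqP Ni0] | ].
  exists (\row_l (if l == i then (1 : rfun C) else 0)); split; [|split].
  - move=> l; rewrite mxE; case: (l == i).
      by rewrite -tofrac1; apply: analytic_poly.
    by rewrite -tofrac0; apply: analytic_poly.
  - exists i; rewrite mxE eqxx.
    have -> : (1 : rfun C) = (1 : {poly C})%:F / (1 : {poly C})%:F.
      by rewrite tofrac1 invr1 mulr1.
    by apply: not_vanishes; rewrite hornerC oner_neq0.
  - move=> kk; rewrite mulmxA.
    have -> : (\row_l (if l == i then (1 : rfun C) else 0)) *m N = 0.
      apply/matrixP => x l; rewrite !mxE big1 // => l' _; rewrite mxE.
      case: eqP => [->|_]; last by rewrite mul0r.
      case: (eqVneq i l) => [<-|hil]; first by rewrite Ni0 mulr0.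
      by rewrite hNdiag // mulr0.
    by rewrite mul0mx mxE; apply: vanishes0.
rewrite negb_exists => /forallP hnz.
have := fun i => decomp lambda (hnz i) => /fin_all_exists [D hD].
pose a i := (D i).1.1.1; pose b i := (D i).1.1.2.
pose g i := (D i).1.2; pose h i := (D i).2.
have hD' i : [/\ (g i).[lambda] != 0, (h i).[lambda] != 0 &
   N i i = (XF lambda ^+ a i * g i)%:F / (XF lambda ^+ b i * h i)%:F] by exact: hD.
clear hD.
pose score i := (a i + \sum_l b l - b i)%N.
case: (@arg_maxnP _ j (fun i => v 0 i != 0) score vj) => i0 vi0 hmax.
have hbs i : (b i <= \sum_l b l)%N by rewrite (bigD1 i) //= leq_addr.
have hle i : v 0 i != 0 -> (a i + b i0 <= a i0 + b i)%N.
  move=> vi; have := hmax i vi; rewrite /score; have := hbs i; have := hbs i0; lia.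
have hj : (b j <= a j)%N.
  by case: (hD' j) => g0 h0 E; apply: (analytic_le g0 h0 E Nj_an).
have hb0 : (b i0 <= a i0)%N by have := hle j vj; lia.
pose phi : rfun C := (XF lambda ^+ (a i0 - b i0))%:F.
exists (\row_i (cst (v 0 i) * phi / N i i)).
have uform i : v 0 i != 0 -> cst (v 0 i) * phi / N i i =
   ((v 0 i)%:P * XF lambda ^+ (a i0 - b i0 + b i - a i) * h i)%:F / (g i)%:F.
  move=> vi; case: (hD' i) => g0 h0 ->.
  have gn0 : g i != 0 by apply: contraNneq g0 => ->; rewrite horner0.
  rewrite invf_div /cst /phi -tofracM mulrA -tofracM.
  apply: frac_eqI; [exact: mulf_neq0 (XF_neq0 _ _) gn0 | exact: gn0 |].
  have hl := hle i vi.
  have HF : XF lambda ^+ (a i0 - b i0) * XF lambda ^+ b i =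
            XF lambda ^+ (a i0 - b i0 + b i - a i) * XF lambda ^+ a i.
    by rewrite -!exprD; congr (_ ^+ _); lia.
  transitivity ((v 0 i)%:P * (XF lambda ^+ (a i0 - b i0) * XF lambda ^+ b i) * h i * g i).
    by ring.
  rewrite HF; ring.
split; [|split].
- move=> i; rewrite mxE; case: (eqVneq (v 0 i) 0) => [->|vi].
    rewrite /cst polyC0 tofrac0 !mul0r -tofrac0; exact: analytic_poly.
  rewrite uform //; exists ((v 0 i)%:P * XF lambda ^+ (a i0 - b i0 + b i - a i) * h i), (g i).
  by case: (hD' i).
- exists i0; rewrite mxE uform //.
  have -> : (a i0 - b i0 + b i0 - a i0 = 0)%N by lia.
  case: (hD' i0) => g0 h0 _; apply: not_vanishes => //.
  by rewrite !hornerM hornerC expr0 hornerC mulr1 mulf_neq0.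
- move=> kk; rewrite mulmxA.
  have -> : (\row_i (cst (v 0 i) * phi / N i i)) *m N = phi *: map_mx (@cst C) v.
    apply/matrixP => x l; rewrite (ord1 x) !mxE (bigD1 l) //= big1 => [|i hi].
      by rewrite mxE addr0 divfK // mulrC.
    by rewrite hNdiag // mulr0.
  rewrite -scalemxAl mxE; apply: analytic_vanish; first exact: analytic_poly.
  exact: hdir.
Qed.
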